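(* Let $\mathscr{H}_2$ be the class of graphs $G$ on at least twelve vertices with $\gamma(G)=2$ and $\operatorname{diam}(\overline{G})=2$. Then $\mathscr{H}_2$ is recognizable: every graph $H$ with $\mathscr{D}(H)=\mathscr{D}(G)$ for some $G\in\mathscr{H}_2$ belongs to $\mathscr{H}_2$.
   Context: All graphs are finite, simple and undirected; $\overline{G}$ is the complement, $\operatorname{diam}$ the diameter and $\gamma$ the domination number. For a vertex $v$, the card $G-v$ is the unlabeled graph obtained by deleting $v$; the deck $\mathscr{D}(G)$ is the multiset of all cards up to isomorphism. A class of graphs is recognizable if every reconstruction (graph with the same deck) of a member of the class is again a member. *)

(* Defs.v *)
From mathcomp Require Import all_boot.
Set Implicit Arguments. Unset Strict Implicit. Unset Printing Implicit Defensive.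

(* A (finite, simple, undirected) graph is a finType V with an adjacency
   relation e : rel V; simplicity (symmetry, irreflexivity) is assumed
   explicitly where needed. *)
Definition simple_graph (V : finType) (e : rel V) : Prop :=
  symmetric e /\ irreflexive e.

Definition compl (V : finType) (e : rel V) : rel V :=
  [rel x y | (x != y) && ~~ e x y].

Definition giso (A B : finType) (ea : rel A) (eb : rel B) : Prop :=
  exists g : A -> B, bijective g /\ forall x y, ea x y = eb (g x) (g y).

Definition card_of (V : finType) (e : rel V) (v : V) : rel {x : V | x != v} :=
  fun x y => e (val x) (val y).
Arguments card_of {V} e v.

(* equality of decks: a bijection between vertex sets matching every card
   with an isomorphic card (= equality of multisets of cards up to iso) *)
Definition same_deck (V W : finType) (e : rel V) (f : rel W) : Prop :=
  exists s : V -> W, bijective s /\ forall v, giso (card_of e v) (card_of f (s v)).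

Definition dominating (V : finType) (e : rel V) (D : {set V}) : bool :=
  [forall x, (x \in D) || [exists y in D, e x y]].

(* domination number: least size of a dominating set (setT always dominates) *)
Definition dom_num (V : finType) (e : rel V) : nat :=
  #|[arg min_(D < [set: V] | dominating e D) #|D| ]|.

Fixpoint ball (V : finType) (e : rel V) (k : nat) (x : V) : {set V} :=
  match k with
  | 0 => [set x]
  | k'.+1 => ball e k' x :|: [set y | [exists z in ball e k' x, e z y]]
  end.

(* distance (meaningful when y is reachable from x; all finite distances
   are < #|V|) *)
Definition dist (V : finType) (e : rel V) (x y : V) : nat :=
  find (fun k => y \in ball e k x) (iota 0 #|V|.+1).

Definition connectedb (V : finType) (e : rel V) : bool :=
  [forall x, forall y, y \in ball e #|V| x].

(* diameter: None = infinite (disconnected graph) *)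
Definition diam (V : finType) (e : rel V) : option nat :=
  if connectedb e then Some (\max_(x : V) \max_(y : V) dist e x y) else None.

Definition in_H2 (V : finType) (e : rel V) : Prop :=
  12 <= #|V| /\ dom_num e = 2 /\ diam (compl e) = Some 2.

(* Main.v *)
Require Import Defs.
From mathcomp Require Import all_boot.
From mathcomp Require Import zify.
Set Implicit Arguments. Unset Strict Implicit. Unset Printing Implicit Defensive.

Lemma sum_sig (T : finType) (P : pred T) (F : T -> nat) :
  \sum_(x : {x | P x}) F (val x) = \sum_(x | P x) F x.
Proof.
rewrite (reindex_omap (val : {x | P x} -> T) insub); last first.
  by move=> i Pi; rewrite insubT.
symmetry; apply: eq_bigl=> -[i iA] /=; rewrite insubT /= iA /=; apply/eqP; congr Some; apply: val_inj.
Qed.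

Section Gen.
Variable T : finType.
Implicit Types r : rel T.

Definition bad r p q z := [&& z != p, z != q, ~~ r p z & ~~ r q z].
Definition cb r p q := \sum_z (bad r p q z : nat).
Definition nb r p q := \sum_z ((z != p) && (z != q) && ~~ bad r p q z : nat).
Definition cnt r b k := \sum_p \sum_q (((p != q) && (r p q == b)) * (cb r p q == k)).

Lemma sum_two (p q : T) : p != q -> \sum_z ((z != p) && (z != q) : nat) = #|T| - 2.
Proof.
move=> pq.
have -> : \sum_z ((z != p) && (z != q) : nat) = #|[set z | (z != p) && (z != q)]|.
  by rewrite -sum1_card [RHS]big_mkcond; apply: eq_bigr => z _; rewrite inE; case: (_ && _).
have : #|[set: T]| = #|[set z | (z != p) && (z != q)]| + 2.
  rewrite (cardsD1 p) (cardsD1 q (setT :\ p)) !inE eq_sym pq /=.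
  suff -> : (setT :\ p) :\ q = [set z | (z != p) && (z != q)] by lia.
  by apply/setP => z; rewrite !inE andbT andbC.
by rewrite cardsT => ->; rewrite addnK.
Qed.

Lemma cb_nb r p q : p != q -> cb r p q + nb r p q = #|T| - 2.
Proof.
move=> pq; rewrite -(sum_two pq) /cb /nb -big_split /=; apply: eq_bigr => z _.
rewrite /bad; by case: (z != p); case: (z != q); case: (r p z); case: (r q z).
Qed.


Lemma cnt_posP r b k :
  reflect (exists p q, [/\ p != q, r p q = b & cb r p q = k]) (0 < cnt r b k).
Proof.
apply: (iffP idP).
  rewrite lt0n sum_nat_eq0 => /forallPn [p]; rewrite sum_nat_eq0 => /forallPn [q] /=.
  case E: ((p != q) && (r p q == b)); case E2: (cb r p q == k) => //= _.
  case/andP: E => pq /eqP rb; exists p, q; split => //; exact/eqP.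
case=> p [q [pq rb ck]].
rewrite lt0n sum_nat_eq0; apply/forallPn; exists p; rewrite sum_nat_eq0; apply/forallPn.
by exists q; rewrite /= pq rb ck !eqxx.
Qed.

Lemma cb0P r p q : reflect (forall z, ~~ bad r p q z) (cb r p q == 0).
Proof.
rewrite /cb sum_nat_eq0; apply: (iffP forallP) => H z.
  by move: (H z); case: (bad r p q z).
by rewrite (negbTE (H z)).
Qed.

Lemma cb_fullP r p q : p != q ->
  reflect (forall z, z != p -> z != q -> bad r p q z) (cb r p q == #|T| - 2).
Proof.
move=> pq; rewrite -(cb_nb r pq) -{1}[cb r p q]addn0 eqn_add2l eq_sym /nb sum_nat_eq0.
apply: (iffP forallP) => H z.
  move=> zp zq; move: (H z); rewrite zp zq /=; by case: (bad r p q z).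
by apply/implyP => _; case: (z != p) (H z) => //; case: (z != q) => //= /(_ isT isT) ->.
Qed.

Lemma third (p q : T) : 3 <= #|T| -> exists z, (z != p) && (z != q).
Proof.
move=> h; apply/existsP; apply: contraLR h; rewrite negb_exists => /forallP H.
rewrite -leqNgt -cardsT; apply: (@leq_trans #|[set p; q]|).
  apply: subset_leq_card; apply/subsetP => z _; move: (H z); rewrite !inE.
  by case: (z == p); case: (z == q).
by rewrite cards2; case: (p != q).
Qed.

Lemma no_dom_iso r b x y a c : symmetric r -> 3 <= #|T| ->
  x != y -> r x y = b -> (forall z, ~~ bad r x y z) ->
  a != c -> r a c = b -> (forall z, z != a -> z != c -> bad r a c z) -> False.
Proof.
move=> sym h3 xy rxy Hd ac rac Hi.
have Hd' : forall z, z != x -> z != y -> r x z || r y z.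
  move=> z zx zy; move: (Hd z); rewrite /bad zx zy /=.
  by case: (r x z); case: (r y z).
have Hi' : forall z, z != a -> z != c -> (r a z = false) /\ (r c z = false).
  move=> z za zc; move: (Hi z za zc); rewrite /bad za zc /=.
  by case: (r a z); case: (r c z).
have es : forall u v : T, u != v -> v != u by move=> u v; rewrite eq_sym.
case: (eqVneq x a) => [ex|xa]; case: (eqVneq x c) => [ex'|xc]; try subst x.
- by rewrite ex' eqxx in ac.
- case: (eqVneq y c) => [ey|yc].
    subst y; case: (third a c h3) => z /andP [za zc].
    by move: (Hd' z za zc); case: (Hi' z za zc) => -> ->.
  case: (Hi' y (es _ _ xy) yc) => ray rcy.
  rewrite ray in rxy; rewrite -rxy in rac.
  by move: (Hd' c (es _ _ ac) (es _ _ yc)); rewrite rac sym rcy.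
- case: (eqVneq y a) => [ey|ya].
    subst y; case: (third a c h3) => z /andP [za zc].
    by move: (Hd' z zc za); case: (Hi' z za zc) => -> ->.
  case: (Hi' y ya (es _ _ xy)) => ray rcy.
  rewrite rcy in rxy; rewrite -rxy in rac.
  by move: (Hd' a ac (es _ _ ya)); rewrite sym rac sym ray.
- case: (Hi' x xa xc) => rax rcx.
  case: (eqVneq y a) => [ey|ya].
    subst y; rewrite sym rax in rxy; rewrite -rxy in rac.
    by move: (Hd' c (es _ _ xc) (es _ _ ac)); rewrite sym rcx rac.
  case: (eqVneq y c) => [ey|yc].
    subst y; rewrite sym rcx in rxy; rewrite -rxy in rac.
    by move: (Hd' a (es _ _ xa) ac); rewrite sym rax sym rac.
  case: (Hi' y ya yc) => ray rcy.
  by move: (Hd' a (es _ _ xa) (es _ _ ya)); rewrite sym rax sym ray.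
Qed.
End Gen.

Lemma cb_iso (A B : finType) (ra : rel A) (rb : rel B) (g : A -> B) :
  bijective g -> (forall x y, ra x y = rb (g x) (g y)) ->
  forall p q, cb rb (g p) (g q) = cb ra p q.
Proof.
move=> bg hg p q; rewrite /cb (reindex g) /=; last exact: onW_bij.
apply: eq_bigr => z _; rewrite /bad !(inj_eq (bij_inj bg)) !hg //.
Qed.

Lemma cnt_iso (A B : finType) (ra : rel A) (rb : rel B) b k :
  giso ra rb -> cnt ra b k = cnt rb b k.
Proof.
case=> g [bg hg]; rewrite /cnt (reindex g) /=; last exact: onW_bij.
apply: eq_bigr => p _; rewrite (reindex g) /=; last exact: onW_bij.
apply: eq_bigr => q _; by rewrite (cb_iso bg hg) (inj_eq (bij_inj bg)) hg.
Qed.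

Lemma arith_k c k n : (c.-1 == k) * c + (n - 2 - c) * (c == k) =
   (c == k.+1) * k.+1 + (c == k) * (n - 2 - k).
Proof.
case: (eqVneq c k) => [->|ck]; case: (eqVneq c k.+1) => [e|ck1]; try lia.
all: case: c ck ck1 => [|c] /= ck ck1; case: (eqVneq c k) => [e|e]; try lia.
Qed.

Section Kelly.
Variable T : finType.
Implicit Types r : rel T.

Lemma cnt_card r b k (w : T) :
  cnt (card_of r w) b k = \sum_(p | p != w) \sum_(q | q != w)
     (((p != q) && (r p q == b)) * ((\sum_(z | z != w) (bad r p q z : nat)) == k)).
Proof.
rewrite /cnt -(sum_sig (fun p => p != w)); apply: eq_bigr => p _.
rewrite -(sum_sig (fun p => p != w)); apply: eq_bigr => q _.
have -> : cb (card_of r w) p q = \sum_(z | z != w) (bad r (val p) (val q) z : nat).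
  by rewrite /cb -(sum_sig (fun p => p != w)); apply: eq_bigr => z _.
done.
Qed.

Lemma inner r p q k : p != q ->
  \sum_w (((w != p) && (w != q)) * (cb r p q - bad r p q w == k)) =
  (cb r p q == k.+1) * k.+1 + (cb r p q == k) * (#|T| - 2 - k).
Proof.
move=> pq; rewrite -arith_k -(cb_nb r pq) addKn.
have H : forall w, ((w != p) && (w != q)) * (cb r p q - bad r p q w == k) =
   bad r p q w * ((cb r p q).-1 == k) + ((w != p) && (w != q) && ~~ bad r p q w) * (cb r p q == k).
  move=> w; rewrite /bad; case: (w != p); case: (w != q); case: (r p w); case: (r q w) => //=;
  by rewrite ?subn0 ?subn1 ?mul0n ?mul1n ?add0n ?addn0.
rewrite (eq_bigr _ (fun w _ => H w)) big_split /= -!big_distrl /= mulnC; congr (_ + _).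
Qed.

Lemma kelly r b k :
  \sum_w cnt (card_of r w) b k = k.+1 * cnt r b k.+1 + (#|T| - 2 - k) * cnt r b k.
Proof.
under eq_bigr => w _ do rewrite cnt_card.
have E : forall w p q, \sum_(z | z != w) (bad r p q z : nat) = cb r p q - bad r p q w.
  by move=> w p q; rewrite [cb r p q](bigD1 w) //= addKn.
under eq_bigr => w _ do (under eq_bigr => p _ do under eq_bigr => q _ do rewrite E).
rewrite /cnt !big_distrr -big_split /=.
have L : forall w, \sum_(p | p != w) \sum_(q | q != w)
           (((p != q) && (r p q == b)) * (cb r p q - bad r p q w == k)) =
     \sum_p \sum_q (((p != q) && (r p q == b)) *
        (((w != p) && (w != q)) * (cb r p q - bad r p q w == k))).
  move=> w; rewrite big_mkcond; apply: eq_bigr => p _.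
  rewrite big_mkcond /= (eq_sym p); case: (w != p) => /=.
    apply: eq_bigr => q _; rewrite (eq_sym q); case: (w != q) => //=; by rewrite ?mul1n ?mul0n ?muln0.
  by rewrite big1 // => q _; rewrite !mul0n muln0.
rewrite (eq_bigr _ (fun w _ => L w)) exchange_big; apply: eq_bigr => p _ /=.
rewrite exchange_big !big_distrr -big_split; apply: eq_bigr => q _ /=.
rewrite -big_distrr /=.
case: (eqVneq p q) => [-> |pq]; first by rewrite /= ?mul0n ?muln0.
by rewrite inner // /=; case: (r p q == b); rewrite ?mul1n ?mul0n ?muln0 /=; lia.
Qed.
End Kelly.

Lemma down (NG NH : nat -> nat) n :
  (forall k, k.+1 * NG k.+1 + (n - 2 - k) * NG k = k.+1 * NH k.+1 + (n - 2 - k) * NH k) ->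
  NG (n - 2) = NH (n - 2) -> NG 0 = NH 0.
Proof.
move=> H Htop.
suff S : forall d, d <= n - 2 -> NG (n - 2 - d) = NH (n - 2 - d).
  by move: (S (n - 2) (leqnn _)); rewrite subnn.
elim=> [|d IH] hd; first by rewrite subn0.
have e : (n - 2 - d.+1).+1 = n - 2 - d by lia.
have e2 : n - 2 - (n - 2 - d.+1) = d.+1 by lia.
move: (H (n - 2 - d.+1)); rewrite e e2 IH; last by lia.
by move/addnI/eqP; rewrite eqn_pmul2l // => /eqP.
Qed.

Lemma card_card (T : finType) (w : T) : #|{: {x : T | x != w}}| = #|T| - 1.
Proof. by rewrite card_sig cardC1 subn1. Qed.

Lemma sum_eq1 (T : finType) (x : T) : \sum_w ((w == x) : nat) = 1.
Proof.
rewrite (bigD1 x) //= eqxx big1 // => z /negbTE -> //.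
Qed.

Lemma sub_neq (T : finType) (P : pred T) (x y : {x | P x}) : (x != y) = (val x != val y).
Proof. by rewrite (inj_eq val_inj). Qed.

Lemma core (T1 T2 : finType) (r1 : rel T1) (r2 : rel T2) b (s : T1 -> T2) :
  bijective s -> 6 <= #|T1| -> symmetric r1 -> symmetric r2 ->
  (forall w k, cnt (card_of r1 w) b k = cnt (card_of r2 (s w)) b k) ->
  0 < cnt r1 b 0 -> cnt r2 b 0 = 0 -> False.
Proof.
move=> bs h6 sym1 sym2 Hd H1 H2.
have eT : #|T1| = #|T2| := bij_eq_card bs.
set n := #|T1|.
have sumE : forall (F : T2 -> nat), \sum_w F (s w) = \sum_w F w.
  by move=> F; rewrite [RHS](reindex s) //=; exact: onW_bij.
have KE : forall k, k.+1 * cnt r1 b k.+1 + (n - 2 - k) * cnt r1 b k =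
                    k.+1 * cnt r2 b k.+1 + (n - 2 - k) * cnt r2 b k.
  move=> k; rewrite /n -kelly eT -kelly -sumE; apply: eq_bigr => w _; exact: Hd.
have Ntop : cnt r1 b (n - 2) != cnt r2 b (n - 2).
  apply/eqP => E; move: (down KE E); rewrite H2; move: H1; case: (cnt r1 b 0) => //.
case/cnt_posP: H1 => x [y [xy rxy /eqP /cb0P Hxy]].
have N1 : cnt r1 b (n - 2) = 0.
  apply/eqP; rewrite -leqn0 leqNgt; apply/negP => /cnt_posP [a [c [ac rac /eqP cac]]].
  move/(cb_fullP r1 ac): cac => Hac.
  by apply: (no_dom_iso sym1 _ xy rxy Hxy ac rac Hac); move: h6; rewrite /n; lia.
have : 0 < cnt r2 b (n - 2) by move: Ntop; rewrite N1 lt0n eq_sym.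
rewrite /n eT => /cnt_posP [a [c [ac rac /eqP cac]]].
move/(cb_fullP r2 ac): cac => Hac.
pose Q (T : finType) (r : rel T) (w : T) := (0 < cnt (card_of r w) b (n - 3) : nat).
have QE : \sum_w Q _ r1 w = \sum_w Q _ r2 w.
  by rewrite -sumE; apply: eq_bigr => w _; rewrite /Q Hd.
have S2 : n - 2 <= \sum_w Q _ r2 w.
  rewrite /n eT -(sum_two ac); apply: leq_sum => w _.
  case: (eqVneq w a) => [//|wa]; case: (eqVneq w c) => [//|wc] /=.
  have aw : a != w by rewrite eq_sym.
  have cw : c != w by rewrite eq_sym.
  rewrite /Q; case: cnt_posP => //; case; exists (exist _ a aw), (exist _ c cw); split => //.
  have e3 : n - 3 = #|{: {x : T2 | x != w}}| - 2 by rewrite card_card -eT /n; lia.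
  rewrite e3; apply/eqP/cb_fullP; first by rewrite sub_neq.
  move=> [z zw]; rewrite !sub_neq /= => za zc.
  by move: (Hac z za zc); rewrite /bad /card_of /= !sub_neq /=.
have S1 : \sum_w Q _ r1 w <= 2.
  apply: (@leq_trans (\sum_w ((w == x) + (w == y)))); last by rewrite big_split /= !sum_eq1.
  apply: leq_sum => w _.
  case: (eqVneq w x) => [_|wx]; first by rewrite /Q; case: (0 < _).
  case: (eqVneq w y) => [_|wy]; first by rewrite /Q; case: (0 < _); rewrite ?addn0.
  rewrite /= addn0 leqn0 /Q eqb0; apply/negP => /cnt_posP [a' [c' [ac' rac' /eqP cac']]].
  have e3 : n - 3 = #|{: {x : T1 | x != w}}| - 2 by rewrite card_card /n; lia.
  rewrite e3 in cac'; move/(cb_fullP _ ac'): cac' => Hac'.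
  have xw : x != w by rewrite eq_sym.
  have yw : y != w by rewrite eq_sym.
  apply: (@no_dom_iso _ (card_of r1 w) b (exist _ x xw) (exist _ y yw) _ _ _ _ _ _ _ ac' rac' Hac').
  - by move=> u v; rewrite /card_of sym1.
  - by rewrite card_card; move: h6; rewrite /n; lia.
  - by rewrite sub_neq.
  - done.
  - by move=> [z zw]; rewrite /bad /card_of !sub_neq /=; exact: Hxy.
move: S1 S2; rewrite QE; move: h6; rewrite /n; lia.
Qed.

Section Balls.
Variable T : finType.
Variable r : rel T.

Lemma ball_mono k m x : k <= m -> ball r k x \subset ball r m x.
Proof.
elim: m => [|m IH]; first by rewrite leqn0 => /eqP ->.
rewrite leq_eqVlt => /orP [/eqP -> //| /IH H].
apply: subset_trans H _; rewrite /=; exact: subsetUl.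
Qed.

Lemma ball1P x y : reflect (y = x \/ r x y) (y \in ball r 1 x).
Proof.
rewrite /= !inE; apply: (iffP orP) => [[/eqP -> | /existsP [z /andP [zx rzy]]]|[->|rxy]].
- by left.
- by right; move: zx; rewrite inE => /eqP <-.
- by left.
- by right; apply/existsP; exists x; rewrite inE eqxx.
Qed.

Lemma ball2P x y : reflect (y = x \/ r x y \/ exists z, r x z /\ r z y) (y \in ball r 2 x).
Proof.
rewrite [ball r 2 x]/= inE; apply: (iffP orP).
  case=> [/ball1P [->|rxy]|]; [by left | by right; left |].
  rewrite inE => /existsP [z /andP [/ball1P [->|rxz] rzy]]; first by right; left.
  by right; right; exists z.
case=> [->|[rxy|[z [rxz rzy]]]].
- by left; apply/ball1P; left.
- by left; apply/ball1P; right.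
- by right; rewrite inE; apply/existsP; exists z; rewrite rzy andbT; apply/ball1P; right.
Qed.

Lemma dist_ball x y : connectedb r -> y \in ball r (dist r x y) x.
Proof.
move=> /forallP /(_ x) /forallP /(_ y) H.
have hs : has (fun k => y \in ball r k x) (iota 0 #|T|.+1).
  by apply/hasP; exists #|T|; [rewrite mem_iota leq0n add0n ltnS leqnn | exact: H].
move: (nth_find 0 hs); rewrite nth_iota // -[X in _ < X](size_iota 0) -has_find //.
Qed.

Lemma dist_le x y k : y \in ball r k x -> k <= #|T| -> dist r x y <= k.
Proof.
move=> H hk; rewrite leqNgt; apply/negP => /(before_find 0).
by rewrite nth_iota ?add0n ?H //; rewrite ltnS.
Qed.

End Balls.

Lemma extract_G (V : finType) (e : rel V) : simple_graph e -> in_H2 e ->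
  cnt e true 0 = 0 /\ 0 < cnt e false 0.
Proof.
move=> [sym irr] [h12 [hdom hdiam]].
have Gc' : forall x y, x != y -> e x y -> exists z, bad e x y z.
  move=> x y xy exy; move: hdiam; rewrite /diam; case: ifP => // conn [hmax].
  have hd : dist (compl e) x y <= 2.
    rewrite -hmax; apply: leq_trans (leq_bigmax x); exact: (leq_bigmax (F := fun y => dist (compl e) x y) y).
  move: (subsetP (ball_mono (compl e) x hd) y (dist_ball x y conn)) => /ball2P.
  case=> [yx|[cxy|[z [cxz czy]]]].
  - by rewrite yx eqxx in xy.
  - by move: cxy; rewrite /compl /= exy andbF.
  - exists z; move: cxz czy; rewrite /compl /bad /= => /andP [xz nxz] /andP [zy nzy].
    by rewrite eq_sym xz zy nxz sym nzy.
have Gc : cnt e true 0 = 0.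
  apply/eqP; rewrite -leqn0 leqNgt; apply/negP => /cnt_posP [x [y [xy exy /eqP /cb0P H]]].
  by case: (Gc' x y xy exy) => z; move: (H z) => /negbTE ->.
split => //.
have domT : dominating e [set: V] by apply/forallP => x; rewrite inE.
move: hdom; rewrite /dom_num; case: arg_minnP => [|D domD _]; first exact: domT.
move/eqP/cards2P => [u [v [uv eD]]].
have Hu : forall z, ~~ bad e u v z.
  move=> z; move/forallP: domD => /(_ z); rewrite eD !inE /bad.
  case/orP => [/orP [] -> //|]; first by rewrite andbF.
  case/existsP => y; rewrite !inE => /andP [/orP [] /eqP -> ezy]; by rewrite ?(sym u z) ?(sym v z) ezy /= ?andbF.
apply/(@cnt_posP V e false 0); exists u, v; split => //; last by apply/eqP/cb0P.
case E: (e u v) => //.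
have : 0 < cnt e true 0 by apply/(@cnt_posP V e true 0); exists u, v; split => //; apply/eqP/cb0P.
by rewrite Gc.
Qed.

Lemma build_H (W : finType) (f : rel W) : simple_graph f -> 12 <= #|W| ->
  cnt f true 0 = 0 -> 0 < cnt f false 0 -> in_H2 f.
Proof.
move=> [sym irr] h12 Hc Hb.
have Hc' : forall x y, x != y -> f x y -> exists z, bad f x y z.
  move=> x y xy fxy; have : cb f x y != 0.
    apply/negP => /eqP c0.
    have : 0 < cnt f true 0 by apply/(@cnt_posP W f true 0); exists x, y; split.
    by rewrite Hc.
  rewrite /cb sum_nat_eq0 => /forallPn [z]; case B: (bad f x y z) => // _; by exists z.
case/cnt_posP: Hb => p [q [pq fpq /eqP /cb0P Hpq]].
have Hpq' : forall z, z != p -> z != q -> f p z || f q z.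
  move=> z zp zq; move: (Hpq z); rewrite /bad zp zq /=; by case: (f p z); case: (f q z).
have h3 : 3 <= #|W| by lia.
split => //; split.
- have domT : dominating f [set: W] by apply/forallP => x; rewrite inE.
  rewrite /dom_num; case: arg_minnP => [|D domD minD]; first exact: domT.
  have dpq : dominating f [set p; q].
    apply/forallP => z; rewrite !inE.
    case: (eqVneq z p) => [//|zp]; case: (eqVneq z q) => [//|zq] /=.
    apply/existsP; case/orP: (Hpq' z zp zq) => fz; [exists p | exists q];
      by rewrite !inE eqxx ?orbT sym fz.
  apply/eqP; rewrite eqn_leq; apply/andP; split.
    by apply: leq_trans (minD _ dpq) _; rewrite cards2; case: (p != q).
  rewrite leqNgt; apply/negP; rewrite ltnS leq_eqVlt ltnS leqn0 => /orP [].
    case/cards1P => w eD.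
    case: (third w w h3) => y /andP [yw _].
    have fwy : f w y.
      move/forallP: domD => /(_ y); rewrite eD !inE (negbTE yw) /= => /existsP [z /andP [zin fyz]].
      by move: zin fyz; rewrite inE => /eqP ->; rewrite sym.
    have wy : w != y by rewrite eq_sym.
    case: (Hc' w y wy fwy) => z; rewrite /bad => /and4P [zw zy nwz nyz].
    move/forallP: domD => /(_ z); rewrite eD !inE (negbTE zw) /= => /existsP [t /andP [tin fzt]].
    by move: tin fzt; rewrite inE => /eqP ->; rewrite sym => fzw; rewrite fzw in nwz.
  move=> /eqP D0; move: D0 domD; move/cards0_eq => -> /forallP /(_ p).
  by rewrite inE /=; case/existsP => t; rewrite inE.
- have B2 : forall x y, y \in ball (compl f) 2 x.
    move=> x y; apply/ball2P.
    case: (eqVneq y x) => [->|yx]; first by left.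
    case F: (f x y).
      have xy : x != y by rewrite eq_sym.
      case: (Hc' x y xy F) => z; rewrite /bad => /and4P [zx zy nxz nyz].
      right; right; exists z; rewrite /compl /= nxz eq_sym zx /=.
      by rewrite zy sym nyz.
    by right; left; rewrite /compl /= eq_sym yx F.
  have conn : connectedb (compl f).
    apply/forallP => x; apply/forallP => y.
    by apply: (subsetP (ball_mono _ _ _)) (B2 x y); lia.
  rewrite /diam conn; congr Some; apply/eqP; rewrite eqn_leq; apply/andP; split.
    apply/bigmax_leqP => x _; apply/bigmax_leqP => y _; apply: dist_le (B2 x y) _; lia.
  case: (third p q h3) => z /andP [zp zq].
  have [x [y [xy fxy]]] : exists x y, x != y /\ f x y.
    case/orP: (Hpq' z zp zq) => fz; [exists p, z | exists q, z]; split => //; by rewrite eq_sym.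
  apply: leq_trans (leq_bigmax x); apply: leq_trans (leq_bigmax (F := fun y => dist (compl f) x y) y).
  rewrite leqNgt; apply/negP => hlt.
  have : y \in ball (compl f) 1 x.
    by apply: (subsetP (ball_mono _ _ _)) (dist_ball x y conn); rewrite -ltnS.
  case/ball1P => [yx|]; first by rewrite yx eqxx in xy.
  by rewrite /compl /= fxy andbF.
Qed.

Theorem lemma10 (V W : finType) (e : rel V) (f : rel W) :
  simple_graph e -> simple_graph f ->
  in_H2 e -> same_deck e f -> in_H2 f.
Proof.
move=> se sf hH [s [bs hs]].
have [Gc Gb] := extract_G se hH.
case: (hH) => h12 _.
case: (se) => sym1 _; case: (sf) => sym2 _.
have eT : #|V| = #|W| := bij_eq_card bs.
case: (bs) => g sg gs.
have bg : bijective g by exists s.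
have Hd : forall w b k, cnt (card_of e w) b k = cnt (card_of f (s w)) b k.
  by move=> w b k; apply: cnt_iso.
have Hd' : forall w b k, cnt (card_of f w) b k = cnt (card_of e (g w)) b k.
  by move=> w b k; rewrite Hd gs.
apply: build_H => //; first by rewrite -eT.
- case E: (cnt f true 0) => [//|m]; exfalso.
  apply: (core bg _ sym2 sym1 (fun w k => Hd' w true k)); [by rewrite -eT; lia | by rewrite E | exact: Gc].
- rewrite lt0n; apply/negP => /eqP E.
  by apply: (core bs _ sym1 sym2 (fun w k => Hd w false k) Gb E); lia.
Qed.
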